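(* Let $q$ be a power of an odd prime $p$ with $q>5$, let $3\le h\le k$ be integers, let $$D_2=\Bigl\{(x_1,\ldots,x_k)\in\mathbb{F}_q^k\setminus\{0\}:\prod_{1\le i<j\le h}(x_i+x_j)=0\Bigr\},$$ and let $n=\#D_2$. Then the minimum nonzero weight of $\mathrm{C}_{D_2}$ is $n-q^{k-1}+1$, and it is attained exactly by the codewords associated with the hyperplanes $x_i+x_j=0$, $1\le i<j\le h$ (i.e. by the codewords $c_f$ with $f=\lambda(x_i+x_j)$, $\lambda\in\mathbb{F}_q^*$).
   Context: For a finite ordered set $D=\{P_1,\ldots,P_n\}\subseteq\mathbb{F}_q^k$, $\mathrm{C}_D=\{c_f=(f(P_1),\ldots,f(P_n)):f:\mathbb{F}_q^k\to\mathbb{F}_q\text{ linear}\}$; the codeword associated with a hyperplane through the origin is $c_f$ for a linear form $f$ defining it. Weights are Hamming weights. *)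

(* Defs.v *)
From HB Require Import structures.
From mathcomp Require Import all_boot all_order all_algebra all_field.
Set Implicit Arguments. Unset Strict Implicit. Unset Printing Implicit Defensive.
Import GRing.Theory.
Local Open Scope ring_scope.

(* Points of F^k are row vectors 'rV[F]_k; coordinate i (0-indexed) of x is x 0 i. *)

Definition D2 (F : finFieldType) (k h : nat) : {set 'rV[F]_k} :=
  [set x : 'rV[F]_k | (x != 0) &&
     ((\prod_(i < k | (i < h)%N)
        \prod_(j < k | ((i < j)%N && (j < h)%N)) (x 0 i + x 0 j)) == 0)].

(* The linear form f_a(x) = sum_i a_i x_i; every linear form F^k -> F is of this shape. *)
Definition lin_form (F : finFieldType) (k : nat) (a x : 'rV[F]_k) : F :=
  \sum_(i < k) a 0 i * x 0 i.

Definition codeword (F : finFieldType) (k : nat) (D : {set 'rV[F]_k}) (a : 'rV[F]_k)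
  : 'rV[F]_#|D| :=
  \row_(t < #|D|) lin_form a (nth 0 (enum D) t).

Definition wt (F : finFieldType) (n : nat) (c : 'rV[F]_n) : nat :=
  #|[set t : 'I_n | c 0 t != 0]|.

Definition e2 (F : finFieldType) (k : nat) (i j : 'I_k) : 'rV[F]_k :=
  delta_mx 0 i + delta_mx 0 j.

(* Main.v *)
Require Import Defs.
From HB Require Import structures.
From mathcomp Require Import all_boot all_order all_algebra all_field.
From mathcomp Require Import ring zify.
Set Implicit Arguments. Unset Strict Implicit. Unset Printing Implicit Defensive.
Import GRing.Theory.
Local Open Scope ring_scope.
Section SA.
Variables (F : finFieldType) (k : nat).
Implicit Types (a x y : 'rV[F]_k).

Lemma lfD a x y : lin_form a (x + y) = lin_form a x + lin_form a y.
Proof. by rewrite /lin_form -big_split /=; apply: eq_bigr => i _; rewrite mxE mulrDr. Qed.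

Lemma lfZ a t x : lin_form a (t *: x) = t * lin_form a x.
Proof. by rewrite /lin_form mulr_sumr; apply: eq_bigr => i _; rewrite mxE mulrCA. Qed.

Lemma lfC a x : lin_form a x = lin_form x a.
Proof. by apply: eq_bigr => i _; rewrite mulrC. Qed.

Lemma lfdelta a m : lin_form a (delta_mx 0 m) = a 0 m.
Proof.
rewrite /lin_form (bigD1 m) //= big1 => [|i /negbTE im]; rewrite mxE eqxx /=.
  by rewrite eqxx mulr1 addr0.
by rewrite im mulr0.
Qed.

Lemma codewordE (D : {set 'rV[F]_k}) a t : codeword D a 0 t = lin_form a (enum_val t).
Proof. by rewrite mxE (enum_val_nth 0). Qed.

Lemma wtE (D : {set 'rV[F]_k}) a :
  wt (codeword D a) = #|[set x in D | lin_form a x != 0]|.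
Proof.
rewrite /wt -(card_imset _ enum_val_inj); apply: eq_card => x; rewrite [in RHS]inE; apply/imsetP/andP => [[t]|[xD nz]].
  by rewrite inE codewordE => nz ->; split => //; apply: enum_valP.
exists (enum_rank_in xD x); last by rewrite enum_rankK_in.
by rewrite inE codewordE enum_rankK_in.
Qed.

Lemma codeword_eqP (D : {set 'rV[F]_k}) a b :
  reflect (forall x, x \in D -> lin_form a x = lin_form b x) (codeword D a == codeword D b).
Proof.
apply: (iffP eqP) => [E x xD|E].
  by have := congr1 (fun c : 'rV[F]_#|D| => c 0 (enum_rank_in xD x)) E; rewrite !codewordE enum_rankK_in.
by apply/rowP => t; rewrite !codewordE E //; apply: enum_valP.
Qed.

Lemma codeword_neq0 (D : {set 'rV[F]_k}) a :
  codeword D a != 0 -> exists2 x, x \in D & lin_form a x != 0.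
Proof.
move=> nz; have [t ct]: exists t, codeword D a 0 t != 0.
  apply/existsP; apply: contraR nz => /existsPn H; apply/eqP/rowP => t.
  by have := H t; rewrite negbK [in RHS]mxE => /eqP.
by exists (enum_val t); [apply: enum_valP | rewrite -codewordE].
Qed.

End SA.

Section SC.
Variables (F : finFieldType) (k h : nat).
Implicit Types (a x y : 'rV[F]_k).

Definition good x := forall i j : 'I_k, (i < j)%N -> (j < h)%N -> x 0 i + x 0 j != 0.

Lemma good_notD x : good x -> x \notin D2 F k h.
Proof.
move=> g; rewrite inE negb_and orbC; apply/orP; left.
apply/prodf_neq0 => i ih; apply/prodf_neq0 => j /andP[ij jh]; exact: g.
Qed.

Lemma inD (i j : 'I_k) x : (i < j)%N -> (j < h)%N -> x != 0 ->
  x 0 i + x 0 j = 0 -> x \in D2 F k h.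
Proof.
move=> ij jh nz e; rewrite inE nz /=; apply/prodf_eq0; exists i.
  exact: ltn_trans jh.
by apply/prodf_eq0; exists j; [rewrite ij jh | rewrite e].
Qed.

Definition ones : 'rV[F]_k := \row_(i < k) (if (i < h)%N then 1 else 0).

Lemma deltaE (m i : 'I_k) : (delta_mx 0 m : 'rV[F]_k) 0 i = (m == i)%:R :> F.
Proof. by rewrite mxE eqxx /= eq_sym. Qed.

Lemma onesE (i : 'I_k) : ones 0 i = if (i < h)%N then 1 else 0.
Proof. by rewrite mxE. Qed.

Lemma lfdelta_l (m : 'I_k) x : lin_form (delta_mx 0 m) x = x 0 m.
Proof. by rewrite lfC lfdelta. Qed.

Lemma lfZ_l t a x : lin_form (t *: a) x = t * lin_form a x.
Proof. by rewrite lfC lfZ lfC. Qed.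

Lemma lfD_l a b x : lin_form (a + b) x = lin_form a x + lin_form b x.
Proof. by rewrite lfC lfD lfC [lin_form x b]lfC. Qed.

Lemma stepA a (m : 'I_k) : (2 : F) != 0 -> a 0 m != 0 ->
  (h <= m)%N || (lin_form a ones != 2 * a 0 m) ->
  exists2 x, lin_form a x = 0 & good x.
Proof.
move=> two am hm; set S := lin_form a ones; set t := - (S / a 0 m).
exists (ones + t *: delta_mx 0 m).
  by rewrite lfD lfZ lfdelta /t mulNr divfK // subrr.
move=> i j ij jh; have ih : (i < h)%N by exact: ltn_trans jh.
rewrite !mxE ih jh /=.
have [ei|ni] := eqVneq i m.
  have nj : j != m by rewrite -ei; apply: contraTneq ij => ->; rewrite ltnn.
  rewrite (negbTE nj) mulr0 addr0 mulr1.
  move: hm; rewrite -ei leqNgt ih /= => hm.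
  rewrite (_ : 1 + t + 1 = (2 * a 0 m - S) / a 0 m); last first.
    by rewrite /t; field.
  by rewrite mulf_neq0 ?invr_eq0 // subr_eq0 eq_sym -ei.
rewrite mulr0 addr0.
have [ej|nj] := eqVneq j m.
  move: hm; rewrite -ej leqNgt jh /= => hm.
  rewrite mulr1 (_ : 1 + (1 + t) = (2 * a 0 m - S) / a 0 m); last first.
    by rewrite /t; field.
  by rewrite mulf_neq0 ?invr_eq0 // subr_eq0 eq_sym -ej.
by rewrite mulr0 !addr0.
Qed.

Lemma rV_neq0 a : a != 0 -> exists m, a 0 m != 0.
Proof.
move=> nz; apply/existsP; apply: contraR nz => /existsPn H; apply/eqP/rowP => t.
by have := H t; rewrite negbK [in RHS]mxE => /eqP.
Qed.

Lemma key a : (2 : F) != 0 -> (3 < #|F|)%N -> a != 0 ->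
  (forall x, lin_form a x = 0 -> good x -> False) ->
  exists lam (i j : 'I_k), [/\ lam != 0, (i < j)%N, (j < h)%N & a = lam *: @e2 F k i j].
Proof.
move=> two F3 nz N; set S := lin_form a ones.
have A m : a 0 m != 0 -> (m < h)%N /\ S = 2 * a 0 m.
  move=> am; case: (boolP ((h <= m)%N || (S != 2 * a 0 m))) => [H|].
    by have [x x0 g] := stepA two am H; case: (N x x0 g).
  by rewrite negb_or -ltnNge negbK => /andP[mh /eqP].
have [u au] := rV_neq0 nz; have [uh Su] := A u au.
have [v vu av] : exists2 v, v != u & a 0 v != 0.
  case: (pickP [pred v | (v != u) && (a 0 v != 0)]) => [v /andP[? ?]|none].
    by exists v.
  have ea : a = a 0 u *: delta_mx 0 u.
    apply/rowP => l; rewrite !mxE eqxx /=.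
    have [->|lu] := eqVneq l u; first by rewrite mulr1.
    by have := none l; rewrite /= lu /= mulr0 => /negbFE/eqP.
  have : S = a 0 u by rewrite /S {1}ea lfZ_l lfdelta_l onesE uh mulr1.
  rewrite Su => /eqP; rewrite -subr_eq0 -{2}(mul1r (a 0 u)) -mulrBl.
  rewrite mulf_eq0 (negbTE au) orbF subr_eq0 => /eqP e.
  have h1 : (1:F) = 2 - 1 by ring.
  by move: (oner_neq0 F); rewrite {1}h1 e subrr eqxx.
have [vh Sv] := A v av.
have auv : a 0 u = a 0 v by apply: (mulfI two); rewrite -Su -Sv.
case: (pickP [pred w | (w != u) && (w != v) && (a 0 w != 0)]) => [w /andP[/andP[wu wv] aw] | none].
  have [wh Sw] := A w aw.
  have auw : a 0 u = a 0 w by apply: (mulfI two); rewrite -Su -Sw.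
  have [s /and3P[s0 s1 sN]] : exists s : F, [&& s != 0, s != 1 & s != -1].
    case: (pickP [pred s : F | [&& s != 0, s != 1 & s != -1]]) => [s P|none].
      by exists s.
    have : (#|F| <= 3)%N.
      apply: leq_trans (card_size [:: 0; 1; -1 : F]); apply: subset_leq_card.
      apply/subsetP => x _; have := none x; rewrite /= !inE.
      by case: (x == 0); case: (x == 1); case: (x == -1).
    by rewrite leqNgt F3.
  set x := ones + (s - 1) *: delta_mx 0 u + (s - 1) *: delta_mx 0 v
            + (- (2 * s)) *: delta_mx 0 w.
  exfalso; apply: (N x).
    rewrite /x !lfD !lfZ !lfdelta -/S Su -auv -auw; ring.
  have uv : u != v by rewrite eq_sym.
  have val (l : 'I_k) : (l < h)%N -> x 0 l = s \/ (x 0 l = 1 - 2 * s /\ l = w) \/ x 0 l = 1.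
    move=> lh; rewrite /x !mxE lh !eqxx /=.
    have [->|lu] := eqVneq l u.
      by left; rewrite ?eqxx ?(negbTE uv) ?(eq_sym u w) ?(negbTE wu) /=; ring.
    have [->|lv] := eqVneq l v.
      by left; rewrite ?eqxx ?(negbTE vu) ?(eq_sym v w) ?(negbTE wv) /=; ring.
    have [->|lw] := eqVneq l w.
      by right; left; split => //; rewrite ?eqxx ?(negbTE wu) ?(negbTE wv) /=; ring.
    by right; right; rewrite ?(negbTE lu) ?(negbTE lv) ?(negbTE lw) /=; ring.
  have two_s : 2 * s != 0 by rewrite mulf_neq0.
  have n1 : 1 - s != 0 by rewrite subr_eq0 eq_sym.
  have n2 : s + 1 != 0 by rewrite -(subr_eq0 s (-1)) opprK in sN *.
  have n3 : 2 * (1 - s) != 0 by rewrite mulf_neq0.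
  have n4 : (2 : F) != 0 := two.
  move=> i j ij jh; have ih : (i < h)%N by exact: ltn_trans jh.
  have nij : i != j by apply: contraTneq ij => ->; rewrite ltnn.
  case: (val i ih) => [->|[[-> ei]|->]]; case: (val j jh) => [->|[[-> ej]|->]].
  all: try by move: nij; rewrite ei ej eqxx.
  all: first [ done | rewrite addrC; done | idtac ].
  all: try by have -> : s + s = 2 * s by ring.
  all: try by have -> : s + (1 - 2 * s) = 1 - s by ring.
  all: try by have -> : 1 - 2 * s + s = 1 - s by ring.
  all: try by have -> : 1 - 2 * s + 1 = 2 * (1 - s) by ring.
  all: try by have -> : 1 + (1 - 2 * s) = 2 * (1 - s) by ring.
  all: try by have -> : 1 + 1 = 2 :> F by ring.
exists (a 0 u).
have e : a = a 0 u *: @e2 F k u v.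
  apply/rowP => l; rewrite !mxE !eqxx /=.
  have [->|lu] := eqVneq l u; first by rewrite eq_sym (negbTE vu) addr0 mulr1.
  have [->|lv] := eqVneq l v; first by rewrite add0r mulr1 auv.
  by have := none l; rewrite /= lu lv /= addr0 mulr0 => /negbFE/eqP.
have [uv|vu'|uv] := ltngtP u v.
- by exists u, v.
- by exists v, u; split => //; rewrite {1}e /e2 addrC.
- by move: vu; rewrite (val_inj uv) eqxx.
Qed.
End SC.

Section SB.
Variables (F : finFieldType) (k : nat).
Implicit Types (a x y : 'rV[F]_k).



Lemma cardZ a : a != 0 ->
  #|[set x : 'rV[F]_k | lin_form a x == 0]| = (#|F| ^ k.-1)%N.
Proof.
move=> nz; have [m am] := rV_neq0 nz.
set Z := [set x : 'rV[F]_k | lin_form a x == 0].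
have fib c : #|[set x : 'rV[F]_k | lin_form a x == c]| = #|Z|.
  rewrite -(card_imset Z (addIr ((c / a 0 m) *: delta_mx 0 m))).
  apply: eq_card => x; rewrite [in X in X = _]inE; apply/eqP/imsetP => [E|[y]].
    exists (x + (- (c / a 0 m)) *: delta_mx 0 m); last by rewrite scaleNr subrK.
    by rewrite /Z inE lfD lfZ lfdelta E mulNr divfK // subrr.
  by rewrite /Z inE => /eqP yZ ->; rewrite lfD lfZ lfdelta divfK // yZ add0r.
have S : (\sum_(x : 'rV[F]_k) 1 = \sum_(c : F) #|[set x : 'rV[F]_k | lin_form a x == c]|)%N.
  rewrite (partition_big (fun x => lin_form a x) xpredT) //=.
  by apply: eq_bigr => c _; rewrite sum1dep_card; apply: eq_card => x; rewrite !inE.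
rewrite sum1_card card_mx mul1n in S.
have S2 : (\sum_(c : F) #|[set x : 'rV[F]_k | lin_form a x == c]| = \sum_(c : F) #|Z|)%N.
  by apply: eq_bigr => c _; exact: fib.
rewrite S2 sum_nat_const in S.
have k0 : (0 < k)%N := leq_ltn_trans (leq0n m) (ltn_ord m).
have F0 : (0 < #|F|)%N by apply/card_gt0P; exists 0.
move: S; rewrite -{1}(prednK k0) expnS mulnC => /eqP.

rewrite (_ : #|xpredT| = #|F|); last by apply: eq_card.
by rewrite [X in _ == X]mulnC eqn_pmul2r // => /eqP.
Qed.
End SB.


Section Main.
Variables (F : finFieldType) (k h : nat).
Hypothesis two : (2 : F) != 0.
Hypothesis F3 : (3 < #|F|)%N.
Hypothesis h2 : (2 <= h)%N.
Hypothesis hk : (h <= k)%N.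

Local Notation D := (D2 F k h).
Local Notation Z a := [set x : 'rV[F]_k | lin_form a x == 0].
Local Notation d := ((#|D|)%:Z - (#|F| ^ k.-1)%:Z + 1)%R.

Lemma wt_split a : a != 0 ->
  [/\ #|D| = (#|D :&: Z a| + wt (codeword D a))%N,
      (#|F| ^ k.-1 = (#|Z a :\ (0%R : 'rV[F]_k)| ).+1)%N &
      D :&: Z a \subset Z a :\ (0%R : 'rV[F]_k)].
Proof.
move=> nz; split.
- rewrite wtE -(cardsID (Z a) D); congr (_ + _)%N; apply: eq_card => x.
  by rewrite !inE andbC.
- rewrite -(cardZ nz) (cardsD1 0 (Z a)) inE.
  suff -> : lin_form a 0 = 0 by rewrite eqxx add1n.
  by rewrite /lin_form big1 // => i _; rewrite mxE mulr0.
- by apply/subsetP => x; rewrite !inE => /andP[/andP[-> _] ->].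
Qed.

Lemma wt_ge a : a != 0 -> d <= (wt (codeword D a))%:Z.
Proof.
move=> nz; have [e1 e2 s] := wt_split nz.
have := subset_leq_card s; move: e1 e2; set w := wt _; set q := (#|F| ^ k.-1)%N; set n := #|D|; set z := #|_ :\ _|; set y := #|D :&: _|.
lia.
Qed.

Lemma wt_eqP a : a != 0 -> (wt (codeword D a))%:Z = d <-> Z a :\ (0%R : 'rV[F]_k) \subset D.
Proof.
move=> nz; have [e1 e2 s] := wt_split nz.
have [le eqc] := subset_leqif_cards s.
have E : (#|D :&: Z a| == #|Z a :\ (0%R : 'rV[F]_k)|) = ((wt (codeword D a))%:Z == d).
  move: e1 e2 le; set w := wt _; set q := (#|F| ^ k.-1)%N; set n := #|D|.
  set z := #|_ :\ _|; set y := #|D :&: _| => e1 e2 le.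
  apply/eqP/eqP; lia.
rewrite eqc eqEsubset s /= in E; split.
  move/eqP; rewrite -E => /subsetP s2; apply/subsetP => x /s2.
  by rewrite inE => /andP[].
move=> sZ; apply/eqP; rewrite -E; apply/subsetP => x xZ.
rewrite inE (subsetP sZ) //=.
by move: xZ; rewrite inE => /andP[].
Qed.

End Main.

Lemma e2_good (F : finFieldType) (k h : nat) (lam : F) (i j : 'I_k) :
  lam != 0 -> (i < j)%N -> (j < h)%N ->
  lam *: @e2 F k i j != 0 /\
  [set x : 'rV[F]_k | lin_form (lam *: @e2 F k i j) x == 0] :\ 0 \subset D2 F k h.
Proof.
move=> l0 ij jh; have nij : i != j by apply: contraTneq ij => ->; rewrite ltnn.
have lf x : lin_form (lam *: @e2 F k i j) x = lam * (x 0 i + x 0 j).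
  by rewrite lfZ_l /e2 lfD_l !lfdelta_l.
split.
  apply: contra l0 => /eqP/rowP/(_ i); rewrite !mxE !eqxx /= (negbTE nij) addr0 mulr1.
  by move=> ->.
apply/subsetP => x xZ.
have /andP[nz /eqP e] : (x != 0) && (x 0 i + x 0 j == 0).
  by move: xZ; rewrite !inE lf mulf_eq0 (negbTE l0).
exact: inD ij jh nz e.
Qed.

Lemma codeword0 (F : finFieldType) (k : nat) (D : {set 'rV[F]_k}) :
  codeword D 0 = 0.
Proof.
by apply/rowP => t; rewrite codewordE mxE /lin_form big1 // => i _; rewrite mxE mul0r.
Qed.

Theorem proposition3p2 (F : finFieldType) (p k h : nat) :
  prime p -> odd p -> p \in [pchar F] -> (5 < #|F|)%N ->
  (3 <= h)%N -> (h <= k)%N ->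
  let D := D2 F k h in
  let n := #|D| in
  let d : int := (n%:Z - (#|F| ^ k.-1)%:Z + 1)%R in
  (* the value d is attained by a nonzero codeword *)
  (exists a : 'rV[F]_k, codeword D a != 0 /\ (wt (codeword D a))%:Z = d)
  /\ (* every nonzero codeword has weight at least d *)
  (forall a : 'rV[F]_k, codeword D a != 0 -> d <= (wt (codeword D a))%:Z)
  /\ (* minimum weight codewords are exactly those of the hyperplanes x_i + x_j = 0 *)
  (forall a : 'rV[F]_k, codeword D a != 0 ->
     ((wt (codeword D a))%:Z = d <->
      exists (lam : F) (i j : 'I_k),
        [/\ lam != 0, (i < j)%N, (j < h)%N &
            codeword D a = codeword D (lam *: @e2 F k i j)])).
Proof.
move=> pp op pc F5 h3 hk D n d.
have two : (2 : F) != 0.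
  rewrite -(dvdn_pcharf pc); apply/negP => /(@dvdn_leq p 2 isT) p2.
  have p1 := prime_gt1 pp.
  have e : p = 2%N by lia.
  by move: op; rewrite e.
have F3 : (3 < #|F|)%N by lia.
have h2 : (1 < h)%N by lia.
have anz a : codeword D a != 0 -> a != 0.
  by apply: contra => /eqP ->; rewrite codeword0.
have P3 : forall a : 'rV[F]_k, codeword D a != 0 ->
     ((wt (codeword D a))%:Z = d <->
      exists (lam : F) (i j : 'I_k),
        [/\ lam != 0, (i < j)%N, (j < h)%N &
            codeword D a = codeword D (lam *: @e2 F k i j)]).
  move=> a ca; have nz := anz a ca; split.
    move/(wt_eqP two F3 h2 hk nz) => sZ.
    have [lam [i [j [l0 ij jh ->]]]] : exists lam (i j : 'I_k),
        [/\ lam != 0, (i < j)%N, (j < h)%N & a = lam *: @e2 F k i j].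
      apply: (@key F k h a two F3 nz) => x x0 g.
      have xnz : x != 0.
        have k1 : (1 < k)%N by lia.
        apply: contraTneq (g (Ordinal (ltnW k1)) (Ordinal k1) isT h2) => ->.
        by rewrite !mxE addr0 eqxx.
      have : x \in D.
        by apply: (subsetP sZ); rewrite !inE xnz x0 eqxx.
      by rewrite (negbTE (good_notD g)).
    by exists lam, i, j.
  move=> [lam [i [j [l0 ij jh E]]]]; rewrite E.
  have [bnz sb] := @e2_good F k h lam i j l0 ij jh.
  exact/(wt_eqP two F3 h2 hk bnz).
split; last split.
- have k0 : (0 < k)%N by lia.
  have k1 : (1 < k)%N by lia.
  have k2 : (2 < k)%N by lia.
  set i0 : 'I_k := Ordinal k0; set i1 : 'I_k := Ordinal k1; set i2 : 'I_k := Ordinal k2.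
  have ca : codeword D (@e2 F k i0 i1) != 0.
    set x : 'rV[F]_k := delta_mx 0 i0 - delta_mx 0 i2.
    have x0 : x 0 i0 = 1 by rewrite !mxE /= subr0.
    have x1 : x 0 i1 = 0 by rewrite !mxE /= subr0.
    have x2 : x 0 i2 = -1 by rewrite !mxE /= sub0r.
    have xD : x \in D.
      apply: (@inD F k h i0 i2) => //.
        by apply/negP => /eqP E; move: x0; rewrite E mxE => /eqP; rewrite eq_sym oner_eq0.
      by rewrite x0 x2 subrr.
    apply/eqP => c0.
    have := congr1 (fun c : 'rV[F]_#|D| => c 0 (enum_rank_in xD x)) c0.
    rewrite codewordE enum_rankK_in // mxE /e2 lfD_l !lfdelta_l x0 x1 addr0.
    by move/eqP; rewrite oner_eq0.
  exists (@e2 F k i0 i1); split => //.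
  apply/(P3 _ ca); exists 1, i0, i1; split => //; first exact: oner_neq0.
  by rewrite scale1r.
- by move=> a ca; exact: (wt_ge two F3 h2 hk (anz a ca)).
- exact: P3.
Qed.
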